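(* Let $R$ be a commutative ring. Every $w$-projective $w$-module over $R$ is $w$-split.
   Context: $R$ is a commutative ring with identity. For an $R$-module $M$ and $s\in R$, $\eta^M_s:M\to M$ is multiplication by $s$. GV-ideals and torsion: - An ideal $J$ of $R$ is a GV-ideal if $J$ is finitely generated and the natural map $R\to\mathrm{Hom}_R(J,R)$ is an isomorphism. $\mathrm{GV}(R)$ is the set of GV-ideals. - $\mathrm{tor_{GV}}(M)=\{x\in M: Jx=0\text{ for some }J\in\mathrm{GV}(R)\}$. - $M$ is GV-torsion if $\mathrm{tor_{GV}}(M)=M$, and GV-torsionfree if $\mathrm{tor_{GV}}(M)=0$. $w$-modules and $w$-projectivity: - A GV-torsionfree $M$ is a $w$-module if $\mathrm{Ext}^1_R(R/J,M)=0$ for all $J\in\mathrm{GV}(R)$. - For GV-torsionfree $M$, $M_w=\{x\in E(M): Jx\subseteq M\text{ for some }J\in\mathrm{GV}(R)\}$, where $E(M)$ is the injective envelope. - $M$ is $w$-projective if $\mathrm{Ext}^1_R(L(M),N)$ is GV-torsion for every torsionfree $w$-module $N$, where $L(M)=(M/\mathrm{tor_{GV}}(M))_w$. $w$-split: - A short exact sequence $0\to A\xrightarrow{f}B\xrightarrow{g}C\to 0$ is $w$-split if there exist $J=\langle d_1,\dots,d_n\rangle\in\mathrm{GV}(R)$ and $h_1,\dots,h_n\in\mathrm{Hom}_R(C,B)$ with $gh_k=\eta^C_{d_k}$ for all $k$. - $M$ is $w$-split if there is a $w$-split exact sequence $0\to K\to P\to M\to 0$ with $P$ projective. *)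

(* Defs.v *)
From HB Require Import structures.
From mathcomp Require Import all_boot all_order all_algebra.
Set Implicit Arguments. Unset Strict Implicit. Unset Printing Implicit Defensive.
Import GRing.Theory.
Local Open Scope ring_scope.

Section WTheory.
Variable R : comPzRingType.

Definition in_ideal (ds : seq R) (x : R) : Prop :=
  exists c : 'I_(size ds) -> R, x = \sum_(i < size ds) c i * ds`_i.

(* J = <ds> is a GV-ideal: J finitely generated (by construction) and the
   natural map R -> Hom_R(J,R), r |-> (x |-> r x), is an isomorphism. *)
Definition GV (ds : seq R) : Prop :=
  (forall r : R, (forall x, in_ideal ds x -> r * x = 0) -> r = 0) /\
  (forall phi : R -> R,
     (forall a x y, in_ideal ds x -> in_ideal ds y ->
        phi (a * x + y) = a * phi x + phi y) ->
     exists r : R, forall x, in_ideal ds x -> phi x = r * x).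

Definition torGV (M : lmodType R) (x : M) : Prop :=
  exists ds, GV ds /\ forall d, in_ideal ds d -> d *: x = 0.

Definition GV_torsionfree (M : lmodType R) : Prop :=
  forall x : M, torGV x -> x = 0.

Definition torsionfree (M : lmodType R) : Prop :=
  forall (r : R) (x : M), (forall s : R, r * s = 0 -> s = 0) -> r *: x = 0 -> x = 0.

Definition ses (A B C : lmodType R) (f : {linear A -> B}) (g : {linear B -> C})
  : Prop :=
  injective f /\ (forall c, exists b, g b = c) /\
  (forall b, g b = 0 <-> exists a, f a = b).

Definition is_R_mod_ideal (ds : seq R) (C : lmodType R) : Prop :=
  exists c : C, (forall x : C, exists r, x = r *: c) /\
                (forall r : R, r *: c = 0 <-> in_ideal ds r).

(* Yoneda Ext^1_R(C, N) = 0 : every extension of N by C splits *)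
Definition Ext1_zero (C N : lmodType R) : Prop :=
  forall (E : lmodType R) (f : {linear N -> E}) (g : {linear E -> C}),
    ses f g -> exists h : {linear C -> E}, forall x, g (h x) = x.

(* Yoneda Ext^1_R(C, N) is GV-torsion: for every extension class xi there is
   a GV-ideal J with d.xi = 0 for all d in J, where d.xi is the pullback of xi
   along eta^C_d; this pullback splits iff eta^C_d lifts through g. *)
Definition Ext1_GVtorsion (C N : lmodType R) : Prop :=
  forall (E : lmodType R) (f : {linear N -> E}) (g : {linear E -> C}),
    ses f g -> exists ds, GV ds /\
      forall d, in_ideal ds d ->
        exists h : {linear C -> E}, forall x, g (h x) = d *: x.

Definition w_module (M : lmodType R) : Prop :=
  GV_torsionfree M /\
  forall ds, GV ds -> forall C : lmodType R, is_R_mod_ideal ds C -> Ext1_zero C M.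

Definition injective_module (E : lmodType R) : Prop :=
  forall (A B : lmodType R) (m : {linear A -> B}) (f : {linear A -> E}),
    injective m -> exists g : {linear B -> E}, forall a, g (m a) = f a.

Definition submodule (E : lmodType R) (S : E -> Prop) : Prop :=
  S 0 /\ (forall x y, S x -> S y -> S (x + y)) /\
  (forall (r : R) x, S x -> S (r *: x)).

Definition essential (Q E : lmodType R) (i : {linear Q -> E}) : Prop :=
  forall S : E -> Prop, submodule S -> (exists y, S y /\ y <> 0) ->
    exists x : Q, S (i x) /\ i x <> 0.

(* L is (isomorphic to) L(M) = (M / tor_GV(M))_w : Q = M/tor_GV(M) via q,
   i : Q -> E an injective envelope, and j identifies L with
   Q_w = {y in E | J y \subseteq Q for some GV-ideal J}. *)
Definition is_L (M L : lmodType R) : Prop :=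
  exists (Q E : lmodType R) (q : {linear M -> Q}) (i : {linear Q -> E})
         (j : {linear L -> E}),
    (forall z, exists x, q x = z) /\ (forall x, q x = 0 <-> torGV x) /\
    injective i /\ injective_module E /\ essential i /\
    injective j /\
    (forall y : E, (exists z, j z = y) <->
       exists ds, GV ds /\ forall d, in_ideal ds d -> exists x, i x = d *: y).

Definition w_projective (M : lmodType R) : Prop :=
  forall L : lmodType R, is_L M L ->
  forall N : lmodType R, torsionfree N -> w_module N -> Ext1_GVtorsion L N.

Definition projective_module (P : lmodType R) : Prop :=
  forall (B C : lmodType R) (g : {linear B -> C}) (f : {linear P -> C}),
    (forall c, exists b, g b = c) ->
    exists h : {linear P -> B}, forall x, g (h x) = f x.

Definition w_split_ses (A B C : lmodType R) (f : {linear A -> B})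
  (g : {linear B -> C}) : Prop :=
  ses f g /\ exists ds, GV ds /\
    forall d, d \in ds -> exists h : {linear C -> B}, forall x, g (h x) = d *: x.

Definition w_split (M : lmodType R) : Prop :=
  exists (K P : lmodType R) (f : {linear K -> P}) (g : {linear P -> M}),
    projective_module P /\ w_split_ses f g.

End WTheory.

(* Main.v *)
Require Import Defs.
From HB Require Import structures.
From mathcomp Require Import all_boot all_order all_algebra.
From mathcomp Require Import boolp classical_sets.
From mathcomp Require Import zify.
Set Implicit Arguments. Unset Strict Implicit. Unset Printing Implicit Defensive.
Import GRing.Theory Num.Theory.

Module PartA.
Local Open Scope ring_scope.

Lemma sig_eqP {T} {P : T -> Prop} (a b : {x | P x}) :
  proj1_sig a = proj1_sig b -> a = b.
Proof. case: a b => [x px] [y py] /= e; subst y; by rewrite (Prop_irrelevance px py). Qed.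

Definition mkLin (R : comPzRingType) (U V : lmodType R) (f : U -> V)
  (H : forall a x y, f (a *: x + y) = a *: f x + f y) : {linear U -> V} :=
  HB.pack f (GRing.isLinear.Build R U V *:%R f H).

Lemma mkLinE (R : comPzRingType) (U V : lmodType R) (f : U -> V) H x :
  @mkLin R U V f H x = f x.
Proof. by []. Qed.

Section QuotZ.
Variables (V : zmodType) (S : V -> Prop) (S0 : S 0)
  (SB : forall x y, S x -> S y -> S (x - y)).

Lemma SN x : S x -> S (- x). Proof. by move=> h; rewrite -sub0r; apply: SB. Qed.
Lemma SD x y : S x -> S y -> S (x + y).
Proof. by move=> hx hy; rewrite -[y]opprK; apply: SB => //; apply: SN. Qed.

Let exS (x : V) : exists y, `[< S (x - y) >].
Proof. by exists x; apply/asboolP; rewrite subrr. Qed.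

Definition canon x := xchoose (exS x).
Lemma canonP x : S (x - canon x).
Proof. exact/asboolP/(xchooseP (exS x)). Qed.
Lemma canon_eq x y : S (x - y) -> canon x = canon y.
Proof.
move=> hxy; apply: eq_xchoose => z; apply/idP/idP => /asboolP h; apply/asboolP.
  by have := SB h hxy; rewrite opprB addrC addrA subrK.
by have := SD hxy h; rewrite addrA subrK.
Qed.
Lemma canon_idem x : canon (canon x) = canon x.
Proof. by apply: canon_eq; rewrite -opprB; apply: SN; apply: canonP. Qed.

Definition quot_ of (forall x y, S x -> S y -> S (x - y)) : Type := {x : V | canon x = x}.
Local Notation quot := (quot_ SB).
HB.instance Definition _ := gen_eqMixin quot.
HB.instance Definition _ := gen_choiceMixin quot.

Definition qpi x : quot := exist _ (canon x) (canon_idem x).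
Lemma qpiE x y : qpi x = qpi y <-> S (x - y).
Proof.
split=> [e|h]; last by apply: sig_eqP => /=; apply: canon_eq.
have e' : canon x = canon y by have := congr1 (@proj1_sig _ _) e.
have := SD (canonP x) (SN (canonP y)).
by rewrite e' opprB addrA subrK.
Qed.
Lemma qpiK (a : quot) : qpi (sval a) = a.
Proof. by apply: sig_eqP => /=; case: a. Qed.
Lemma qpi_sval x : S (sval (qpi x) - x).
Proof. by rewrite /= -opprB; apply: SN; apply: canonP. Qed.
Lemma quot_ind (P : quot -> Prop) : (forall x, P (qpi x)) -> forall a, P a.
Proof. by move=> h a; rewrite -(qpiK a). Qed.

Definition qzero := qpi 0.
Definition qadd (a b : quot) := qpi (sval a + sval b).
Definition qopp (a : quot) := qpi (- sval a).
Lemma qaddE x y : qadd (qpi x) (qpi y) = qpi (x + y).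
Proof.
apply/qpiE; have := SD (qpi_sval x) (qpi_sval y).
by rewrite opprD addrACA.
Qed.
Lemma qoppE x : qopp (qpi x) = qpi (- x).
Proof. by apply/qpiE; have := SN (qpi_sval x); rewrite opprB addrC opprK. Qed.

Lemma qaddA : associative qadd.
Proof.
by elim/quot_ind => x; elim/quot_ind => y; elim/quot_ind => z; rewrite !qaddE addrA.
Qed.
Lemma qaddC : commutative qadd.
Proof. by elim/quot_ind => x; elim/quot_ind => y; rewrite !qaddE addrC. Qed.
Lemma qadd0 : left_id qzero qadd.
Proof. by elim/quot_ind => x; rewrite qaddE add0r. Qed.
Lemma qaddN : left_inverse qzero qopp qadd.
Proof. by elim/quot_ind => x; rewrite qoppE qaddE addNr. Qed.

HB.instance Definition _ := GRing.isZmodule.Build quot qaddA qaddC qadd0 qaddN.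

Lemma qpiD x y : qpi (x + y) = qpi x + qpi y.
Proof. by rewrite -qaddE. Qed.
Lemma qpiN x : qpi (- x) = - qpi x.
Proof. by rewrite -qoppE. Qed.
Lemma qpi0 : qpi 0 = 0. Proof. by []. Qed.
Lemma qpiB x y : qpi (x - y) = qpi x - qpi y.
Proof. by rewrite qpiD qpiN. Qed.
Lemma qpi_eq0 x : qpi x = 0 <-> S x.
Proof. by rewrite -qpi0 qpiE subr0. Qed.
End QuotZ.

Section Generic.
Variable R : comPzRingType.

Section Sub.
Variables (V : lmodType R) (S : V -> Prop) (HS : submodule S).
Let S0 : S 0. Proof. by case: HS. Qed.
Let SD : forall x y, S x -> S y -> S (x + y). Proof. by case: HS => _ []. Qed.
Let SZ : forall r x, S x -> S (r *: x). Proof. by case: HS => _ []. Qed.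
Let SN x : S x -> S (- x). Proof. by move=> h; rewrite -scaleN1r; apply: SZ. Qed.

Definition subm_ of submodule S : Type := {x : V | S x}.
Local Notation subm := (subm_ HS).
HB.instance Definition _ := gen_eqMixin subm.
HB.instance Definition _ := gen_choiceMixin subm.
Definition szero : subm := exist _ 0 S0.
Definition sadd (a b : subm) : subm := exist _ (sval a + sval b) (SD (svalP a) (svalP b)).
Definition sopp (a : subm) : subm := exist _ (- sval a) (SN (svalP a)).
Definition sscale r (a : subm) : subm := exist _ (r *: sval a) (SZ r (svalP a)).
Lemma saddA : associative sadd.
Proof. by move=> a b c; apply: sig_eqP => /=; rewrite addrA. Qed.
Lemma saddC : commutative sadd.
Proof. by move=> a b; apply: sig_eqP => /=; rewrite addrC. Qed.
Lemma sadd0 : left_id szero sadd.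
Proof. by move=> a; apply: sig_eqP => /=; rewrite add0r. Qed.
Lemma saddN : left_inverse szero sopp sadd.
Proof. by move=> a; apply: sig_eqP => /=; rewrite addNr. Qed.
HB.instance Definition _ := GRing.isZmodule.Build subm saddA saddC sadd0 saddN.
Lemma sscaleA a b v : sscale a (sscale b v) = sscale (a * b) v.
Proof. by apply: sig_eqP => /=; rewrite scalerA. Qed.
Lemma sscale1 : left_id 1 sscale.
Proof. by move=> v; apply: sig_eqP => /=; rewrite scale1r. Qed.
Lemma sscaleDr : right_distributive sscale +%R.
Proof. by move=> a u v; apply: sig_eqP => /=; rewrite scalerDr. Qed.
Lemma sscaleDl v : {morph sscale^~ v: a b / a + b}.
Proof. by move=> a b; apply: sig_eqP => /=; rewrite scalerDl. Qed.
HB.instance Definition _ := GRing.Zmodule_isLmodule.Build R subm sscaleA sscale1 sscaleDr sscaleDl.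

Lemma sval_lin a (x y : subm) : sval (a *: x + y) = a *: sval x + sval y.
Proof. by []. Qed.
Definition svalL : {linear subm -> V} := mkLin sval_lin.
Lemma subm_eq (a b : subm) : sval a = sval b -> a = b.
Proof. exact: sig_eqP. Qed.
End Sub.

Section Quot.
Variables (V : lmodType R) (S : V -> Prop) (HS : submodule S).
Let S0 : S 0. Proof. by case: HS. Qed.
Let SD : forall x y, S x -> S y -> S (x + y). Proof. by case: HS => _ []. Qed.
Let SZ : forall r x, S x -> S (r *: x). Proof. by case: HS => _ []. Qed.
Let SB x y : S x -> S y -> S (x - y).
Proof. by move=> hx hy; apply: SD => //; rewrite -scaleN1r; apply: SZ. Qed.

Definition quotm := quot_ S0 SB.
HB.instance Definition _ := GRing.Zmodule.on quotm.
Definition mpi (x : V) : quotm := qpi S0 SB x.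
Lemma mpiD x y : mpi (x + y) = mpi x + mpi y.
Proof. exact: qpiD. Qed.
Definition qscale r (a : quotm) : quotm := mpi (r *: sval a).
Lemma qscaleE r x : qscale r (mpi x) = mpi (r *: x).
Proof.
apply/qpiE; rewrite -scalerBr; apply: SZ; exact: qpi_sval.
Qed.
Lemma mquot_ind (P : quotm -> Prop) : (forall x, P (mpi x)) -> forall a, P a.
Proof. exact: quot_ind. Qed.
Lemma qscaleA a b v : qscale a (qscale b v) = qscale (a * b) v.
Proof. by elim/mquot_ind: v => x; rewrite !qscaleE scalerA. Qed.
Lemma qscale1 : left_id 1 qscale.
Proof. by elim/mquot_ind => x; rewrite qscaleE scale1r. Qed.
Lemma qscaleDr : right_distributive qscale +%R.
Proof.
move=> a; elim/mquot_ind => x; elim/mquot_ind => y.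
by rewrite -mpiD qscaleE scalerDr mpiD !qscaleE.
Qed.
Lemma qscaleDl v : {morph qscale^~ v: a b / a + b}.
Proof.
by elim/mquot_ind: v => x a b; rewrite !qscaleE scalerDl mpiD.
Qed.
HB.instance Definition _ := GRing.Zmodule_isLmodule.Build R quotm qscaleA qscale1 qscaleDr qscaleDl.

Lemma mpi_lin a x y : mpi (a *: x + y) = a *: mpi x + mpi y.
Proof. by rewrite mpiD -qscaleE. Qed.
Definition mpiL : {linear V -> quotm} := mkLin mpi_lin.
Lemma mpiZ a x : mpi (a *: x) = a *: mpi x.
Proof. by rewrite -qscaleE. Qed.
Lemma mpiE x y : mpi x = mpi y <-> S (x - y).
Proof. exact: qpiE. Qed.
Lemma mpi_eq0 x : mpi x = 0 <-> S x.
Proof. exact: qpi_eq0. Qed.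
Lemma mpi_sval x : S (sval (mpi x) - x).
Proof. exact: qpi_sval. Qed.
Lemma mpiK (a : quotm) : mpi (sval a) = a.
Proof. exact: qpiK. Qed.
End Quot.
End Generic.
Notation subm HS := (subm_ HS).

End PartA.
Import PartA.

Module PartB.
Local Open Scope ring_scope.
Local Open Scope classical_set_scope.

Lemma int_period (P : int -> Prop) : P 0 -> (forall m n, P m -> P n -> P (m - n)) ->
  (forall n, P n -> n = 0) \/
  exists n0 : nat, (0 < n0)%N /\ P n0%:Z /\ (forall n, P n -> exists q, n = q * n0%:Z)
     /\ (forall r : nat, (0 < r < n0)%N -> ~ P r%:Z).
Proof.
move=> P0 PB.
have PN n : P n -> P (- n) by move=> h; rewrite -sub0r; apply: PB.
have PD m n : P m -> P n -> P (m + n).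
  by move=> hm hn; rewrite -[n]opprK; apply: PB => //; apply: PN.
have PM n : P n -> forall q, P (q * n).
  move=> hn; have Pnat k : P (k%:Z * n).
    elim: k => [|k ih]; first by rewrite mul0r.
    by rewrite -addn1 PoszD mulrDl mul1r; apply: PD.
  by case=> k; [apply: Pnat | rewrite NegzE mulNr; apply: PN; apply: Pnat].
case: (pselect (forall n, P n -> n = 0)) => [h|h]; [by left|right].
have [n [Pn nn0]] : exists n, P n /\ n <> 0.
  apply: contra_notP h => h1 n Pn; apply: contra_notP h1 => h2; by exists n.
have exm : exists m : nat, (0 < m)%N && `[< P m%:Z >].
  exists `|n|%N; apply/andP; split; first by apply/ltP; lia.
  apply/asboolP; case: n Pn nn0 => k Pk nk; first by [].
  by rewrite NegzE in Pk; have := PN _ Pk; rewrite opprK.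
pose n0 := ex_minn exm.
have [n0P n0min] : ((0 < n0)%N && `[< P n0%:Z >]) /\
   (forall m, (0 < m)%N && `[< P m%:Z >] -> (n0 <= m)%N).
  by rewrite /n0; case: ex_minnP.
case/andP: n0P => n0pos /asboolP Pn0.
have nomid : forall r : nat, (0 < r < n0)%N -> ~ P r%:Z.
  move=> r /andP[r0 rn] Pr.
  have := n0min r; rewrite r0 /= => /(_ (asboolT Pr)) hh.
  by move: rn; rewrite ltnNge hh.
exists n0; split => //; split => //; split => // m Pm.
have n0nz : n0%:Z != 0 by apply/eqP; lia.
have := divz_eq m n0%:Z; set q := (m %/ n0%:Z)%Z; set r := (m %% n0%:Z)%Z => em.
have r0 : 0 <= r by apply: modz_ge0.
have rlt : r < n0%:Z by apply: ltz_pmod; lia.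
have Pr : P r by have := PB _ _ Pm (PM _ Pn0 q); rewrite em addrC addKr.
exists q; suff : r = 0 by move=> r00; rewrite em r00 addr0.
have [k ek] : exists k : nat, r = k%:Z by exists `|r|%N; rewrite gez0_abs.
rewrite ek in rlt Pr *.
case: k {ek} rlt Pr => [|k] kl Pk; first by [].
exfalso; apply: (nomid k.+1) => //; apply/andP; split => //; lia.
Qed.

Definition isZ (q : rat) : Prop := exists z : int, q = z%:~R.
Lemma isZ0 : isZ 0. Proof. by exists 0. Qed.
Lemma isZB x y : isZ x -> isZ y -> isZ (x - y).
Proof. by move=> [a ->] [b ->]; exists (a - b); rewrite intrB. Qed.

Definition QZ := quot_ isZ0 isZB.
HB.instance Definition _ := GRing.Zmodule.on QZ.
Definition qz (q : rat) : QZ := qpi isZ0 isZB q.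

Lemma qzD x y : qz (x + y) = qz x + qz y. Proof. exact: qpiD. Qed.
Lemma qzMn x n : qz (x *+ n) = qz x *+ n.
Proof. elim: n => [|n ih]; first by []. by rewrite !mulrS qzD ih. Qed.
Lemma qz_eq0 x : qz x = 0 <-> isZ x. Proof. exact: qpi_eq0. Qed.
Lemma qz_ind (P : QZ -> Prop) : (forall x, P (qz x)) -> forall a, P a.
Proof. exact: quot_ind. Qed.

Lemma QZ_div (u : QZ) (n : nat) : (0 < n)%N -> exists y : QZ, y *~ n%:Z = u.
Proof.
move=> n0; elim/qz_ind: u => q; exists (qz (q / n%:R)).
rewrite -pmulrn -qzMn; congr qz; rewrite -[_ *+ n]mulr_natr divfK //.
by rewrite pnatr_eq0 -lt0n.
Qed.

Lemma inv_notZ (n : nat) : (1 < n)%N -> ~ isZ (n%:R^-1).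
Proof.
move=> n1 [z ez].
have h : ((1 : int)%:~R : rat) = (n%:Z * z)%:~R.
  rewrite intrM -ez /= mulrC -[n%:Z%:~R]/(n%:R : rat) mulVf //.
  by rewrite pnatr_eq0; apply/eqP; lia.
move/eqP: h; rewrite eqr_int => /eqP h.
case: (ltrP 0 z) => hz.
  have hn : n%:Z <= n%:Z * z by rewrite ler_peMr // -gtz0_ge1.
  have : n%:Z <= 1 by rewrite h.
  by rewrite lez_nat leqNgt n1.
have hn : n%:Z * z <= 0 by apply: mulr_ge0_le0.
have : (1 : int) <= 0 by rewrite h.
by rewrite ler10.
Qed.

Section Ext.
Variable B : zmodType.

Definition Good (G : set (B * QZ)) : Prop :=
  G (0, 0) /\ (forall x u y v, G (x, u) -> G (y, v) -> G (x - y, u - v)) /\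
  (forall x u v, G (x, u) -> G (x, v) -> u = v).

Lemma Good_mul G : Good G -> forall x u n, G (x, u) -> G (x *~ n, u *~ n).
Proof.
move=> [G0 [GB _]] x u n Gxu.
have GN y v : G (y, v) -> G (- y, - v).
  by move=> h; rewrite -sub0r -[- v]sub0r; apply: GB.
have GD y v z w : G (y, v) -> G (z, w) -> G (y + z, v + w).
  move=> h1 h2; rewrite -[z]opprK -[w]opprK; apply: GB => //; exact: GN.
have Gnat k : G (x *~ k%:Z, u *~ k%:Z).
  elim: k => [|k ih]; first by rewrite !mulr0z.
  by rewrite -addn1 PoszD !mulrzDr !mulr1z; apply: GD.
by case: n => k; [apply: Gnat | rewrite NegzE !mulrNz; apply: GN; apply: Gnat].
Qed.

Lemma ext_step (A : set (B * QZ)) (b : B) (y : QZ) : Good A ->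
  (forall n u, A (b *~ n, u) -> u = y *~ n) ->
  Good (fun p => exists x u n, A (x, u) /\ p = (x + b *~ n, u + y *~ n)).
Proof.
move=> GA cond; have [A0 [AB Af]] := GA; split; [|split].
- by exists 0, 0, 0; split => //; rewrite !mulr0z !addr0.
- move=> x u x' u' [a [c [n [Aac [-> ->]]]]] [a' [c' [n' [Aac' [-> ->]]]]].
  exists (a - a'), (c - c'), (n - n'); split; first exact: AB.
  by rewrite !mulrzBr; congr (_, _); rewrite opprD addrACA.
- move=> x u v [a [c [n [Aac [ex eu]]]]] [a' [c' [n' [Aac' [ex' ev]]]]].
  rewrite eu ev.
  have e0 : a + b *~ n = a' + b *~ n' by rewrite -ex.
  have e1 : a - a' = b *~ (n' - n).
    by rewrite mulrzBr -[a](addrK (b *~ n)) e0 [a' + _]addrC addrAC addrK.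
  have h1 := AB _ _ _ _ Aac Aac'; rewrite e1 in h1.
  have := cond _ _ h1; rewrite mulrzBr => e2.
  by rewrite -[c](subrK c') e2 addrAC subrK addrC.
Qed.

Lemma ext_QZ (G : set (B * QZ)) : Good G ->
  exists H : B -> QZ, (forall x y, H (x + y) = H x + H y) /\
                      (forall x u, G (x, u) -> H x = u).
Proof.
move=> GG.
pose P' := fun A : set (B * QZ) => A = set0 \/ (Good A /\ G `<=` A).
have [A [PA Amax]] : exists A, P' A /\ forall C, A `<` C -> ~ P' C.
  apply: Zorn_bigcup => F FP' Ftot.
  case: (pselect (exists X, F X /\ X <> set0)) => [[X0 [FX0 X0n]]|h]; last first.
    left; apply/seteqP; split => // p [X FX Xp]; apply: h; exists X; split => //.
    by move=> e; rewrite e in Xp.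
  have GX X : F X -> X <> set0 -> Good X /\ G `<=` X.
    by move=> FX Xn; case: (FP' X FX).
  right; have [GX0 GsX0] := GX X0 FX0 X0n.
  have ne (X : set (B * QZ)) p : X p -> X <> set0 by move=> Xp e; rewrite e in Xp.
  split; last by move=> p Gp; exists X0 => //; apply: GsX0.
  split; [|split].
  - by exists X0 => //; case: GX0.
  - move=> x u x' u' [X FX Xp] [X' FX' Xp'].
    have [GXX _] := GX X FX (ne _ _ Xp); have [GXX' _] := GX X' FX' (ne _ _ Xp').
    case: (Ftot X X' FX FX') => sub.
      by exists X' => //; case: GXX' => _ [h _]; apply: h => //; apply: sub.
    by exists X => //; case: GXX => _ [h _]; apply: h => //; apply: sub.
  - move=> x u v [X FX Xp] [X' FX' Xp'].
    have [GXX _] := GX X FX (ne _ _ Xp); have [GXX' _] := GX X' FX' (ne _ _ Xp').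
    case: (Ftot X X' FX FX') => sub.
      by case: GXX' => _ [_ h]; exact: h _ _ _ (sub _ Xp) Xp'.
    by case: GXX => _ [_ h]; exact: h _ _ _ Xp (sub _ Xp').
have [GA GA'] : Good A /\ G `<=` A.
  case: PA => // A0; exfalso; apply: (Amax G); last by right; split.
  rewrite A0; split; first by [].
  by move=> e; case: GG => h _; exact: e _ h.
have [A0 [AB Af]] := GA.
have tot : forall b, exists u, A (b, u).
  move=> b; case: (pselect (exists u, A (b, u))) => // nb; exfalso.
  have Pp : forall n m, (exists u, A (b *~ n, u)) -> (exists u, A (b *~ m, u)) ->
      exists u, A (b *~ (n - m), u).
    by move=> n m [u h1] [v h2]; exists (u - v); rewrite mulrzBr; apply: AB.
  have [y cond] : exists y : QZ, forall n u, A (b *~ n, u) -> u = y *~ n.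
    case: (int_period (P := fun n => exists u, A (b *~ n, u))) => //.
    - by exists 0; rewrite mulr0z.
    - move=> h0; exists 0 => n u h; have := h0 n (ex_intro _ u h) => en.
      by rewrite en mulr0z in h *; apply: Af h A0.
    - move=> [n0 [n0p [[u0 Pn0] [dv _]]]].
      have [y ey] := QZ_div u0 n0p; exists y => n u h.
      have [q eq] := dv n (ex_intro _ u h).
      have := Good_mul GA q Pn0; rewrite -mulrzA mulrC -eq => h'.
      by rewrite (Af _ _ _ h h') eq -ey -mulrzA mulrC.
  pose C := fun p : B * QZ => exists x u n, A (x, u) /\ p = (x + b *~ n, u + y *~ n).
  have GC : Good C := ext_step GA cond.
  apply: (Amax C).
  - split; first by move=> p Ap; exists p.1, p.2, 0; rewrite !mulr0z !addr0; case: p Ap.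
    move=> e; apply: nb; exists y; apply: e.
    by exists 0, 0, 1; split => //; rewrite !mulr1z !add0r.
  - right; split => // p Gp; exists p.1, p.2, 0; rewrite !mulr0z !addr0.
    by split => //; [apply: GA'; case: p Gp | case: p Gp].
have tot' x : exists u, `[< A (x, u) >].
  by case: (tot x) => u h; exists u; apply/asboolP.
pose H x := xchoose (tot' x).
have HP x : A (x, H x) by apply/asboolP; exact: (xchooseP (tot' x)).
have AN y v : A (y, v) -> A (- y, - v).
  by move=> h; rewrite -sub0r -[- v]sub0r; apply: AB.
exists H; split.
  move=> x y; apply: Af (HP _) _.
  have := AB _ _ _ _ (HP x) (AN _ _ (HP y)).
  by rewrite !opprK.
by move=> x u Gxu; apply: Af (HP _) (GA' _ Gxu).
Qed.

Lemma sep_QZ (b : B) : b <> 0 ->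
  exists H : B -> QZ, (forall x y, H (x + y) = H x + H y) /\ H b <> 0.
Proof.
move=> b0.
have [y [y0 cond]] : exists y : QZ, y <> 0 /\ forall n, b *~ n = 0 -> y *~ n = 0.
  case: (int_period (P := fun n => b *~ n = 0)) => //.
  - by move=> m n hm hn; rewrite mulrzBr hm hn subrr.
  - move=> h0; exists (qz (2%:R^-1)); split.
      by move/qz_eq0; apply: inv_notZ.
    by move=> n /h0 ->.
  - move=> [n0 [n0p [Pn0 [dv _]]]].
    have n01 : (1 < n0)%N.
      case: n0 n0p Pn0 {dv} => [|[|k]] //= _; by rewrite mulr1z.
    exists (qz (n0%:R^-1)); split; first by move/qz_eq0; apply: inv_notZ.
    move=> n /dv [q ->]; rewrite mulrC mulrzA -pmulrn -qzMn.
    have -> : qz (n0%:R^-1 *+ n0) = 0.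
      apply/qz_eq0; exists 1; rewrite -[_ *+ n0]mulr_natr mulVf //.
      by rewrite pnatr_eq0 -lt0n (ltn_trans _ n01).
    by rewrite mul0rz.
pose G0 := fun p : B * QZ => exists n, p = (b *~ n, y *~ n).
have GG : Good G0.
  split; [|split].
  - by exists 0; rewrite !mulr0z.
  - move=> x u x' u' [n [-> ->]] [n' [-> ->]]; exists (n - n').
    by rewrite !mulrzBr.
  - move=> x u v [n [ex eu]] [n' [ex' ev]]; rewrite eu ev.
    apply/eqP; rewrite -subr_eq0 -mulrzBr; apply/eqP; apply: cond.
    by rewrite mulrzBr; apply/eqP; rewrite subr_eq0; apply/eqP; rewrite -ex.
have [H [HD HG]] := ext_QZ GG.
exists H; split => //; rewrite (HG b y) //; by exists 1; rewrite !mulr1z.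
Qed.
End Ext.

End PartB.
Import PartB.

Module PartC.
Local Open Scope ring_scope.

Section E0.
Variables (R : comPzRingType) (X : Type).
Definition addf (phi : R -> QZ) := forall a b, phi (a + b) = phi a + phi b.
Definition E0 := {phi : X -> R -> QZ | forall x, addf (phi x)}.
HB.instance Definition _ := gen_eqMixin E0.
HB.instance Definition _ := gen_choiceMixin E0.

Lemma E0_eq (f g : E0) : (forall x s, sval f x s = sval g x s) -> f = g.
Proof. move=> h; apply: sig_eqP; apply: funext => x; apply: funext => s; exact: h. Qed.

Lemma ezero_subproof (x : X) : addf (fun _ => 0). Proof. by move=> a b; rewrite addr0. Qed.
Definition ezero : E0 := exist _ (fun _ _ => 0) ezero_subproof.
Lemma eadd_subproof (f g : E0) x : addf (fun s => sval f x s + sval g x s).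
Proof. by move=> a b; rewrite (svalP f) (svalP g) addrACA. Qed.
Definition eadd (f g : E0) : E0 := exist _ _ (eadd_subproof f g).
Lemma eopp_subproof (f : E0) x : addf (fun s => - sval f x s).
Proof. by move=> a b; rewrite (svalP f) opprD. Qed.
Definition eopp (f : E0) : E0 := exist _ _ (eopp_subproof f).
Lemma escale_subproof r (f : E0) x : addf (fun s => sval f x (s * r)).
Proof. by move=> a b; rewrite mulrDl (svalP f). Qed.
Definition escale r (f : E0) : E0 := exist _ _ (escale_subproof r f).

Lemma eaddA : associative eadd.
Proof. by move=> f g h; apply: E0_eq => x s /=; rewrite addrA. Qed.
Lemma eaddC : commutative eadd.
Proof. by move=> f g; apply: E0_eq => x s /=; rewrite addrC. Qed.
Lemma eadd0 : left_id ezero eadd.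
Proof. by move=> f; apply: E0_eq => x s /=; rewrite add0r. Qed.
Lemma eaddN : left_inverse ezero eopp eadd.
Proof. by move=> f; apply: E0_eq => x s /=; rewrite addNr. Qed.
HB.instance Definition _ := GRing.isZmodule.Build E0 eaddA eaddC eadd0 eaddN.
Lemma escaleA a b v : escale a (escale b v) = escale (a * b) v.
Proof. by apply: E0_eq => x s /=; rewrite mulrA. Qed.
Lemma escale1 : left_id 1 escale.
Proof. by move=> f; apply: E0_eq => x s /=; rewrite mulr1. Qed.
Lemma escaleDr : right_distributive escale +%R.
Proof. by move=> a f g; apply: E0_eq => x s /=. Qed.
Lemma escaleDl v : {morph escale^~ v: a b / a + b}.
Proof. by move=> a b; apply: E0_eq => x s /=; rewrite mulrDr (svalP v). Qed.
HB.instance Definition _ := GRing.Zmodule_isLmodule.Build R E0 escaleA escale1 escaleDr escaleDl.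

Lemma E0_sub f g x s : sval (f - g : E0) x s = sval f x s - sval g x s.
Proof. by []. Qed.
Lemma E0_0 x s : sval (0 : E0) x s = 0. Proof. by []. Qed.
Lemma E0_scale r (f : E0) x s : sval (r *: f) x s = sval f x (s * r).
Proof. by []. Qed.

Lemma E0_injective : injective_module E0.
Proof.
move=> A B m f minj.
have hx : forall x, exists H : B -> QZ, (forall b b', H (b + b') = H b + H b') /\
    (forall a, H (m a) = sval (f a) x 1).
  move=> x.
  pose G := fun p : B * QZ => exists a, p = (m a, sval (f a) x 1).
  have GG : Good G.
    split; [|split].
    - by exists 0; rewrite !linear0.
    - move=> b u b' u' [a [-> ->]] [a' [-> ->]]; exists (a - a').
      by rewrite !linearB.
    - move=> b u v [a [eb eu]] [a' [eb' ev]]; rewrite eu ev.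
      by rewrite (minj a a') // -eb -eb'.
  have [H [HD HG]] := ext_QZ GG.
  by exists H; split => // a; apply: HG; exists a.
have [Hf HfP] := choice hx.
have gP : forall b : B, forall x, addf (fun s => Hf x (s *: b)).
  by move=> b x a a'; rewrite scalerDl (proj1 (HfP x)).
pose g b : E0 := exist _ _ (gP b).
have glin : forall a b b', g (a *: b + b') = a *: g b + g b'.
  move=> a b b'; apply: E0_eq => x s /=.
  by rewrite scalerDr (proj1 (HfP x)) scalerA.
exists (mkLin glin) => a; rewrite mkLinE; apply: E0_eq => x s /=.
by rewrite -linearZ (proj2 (HfP x)) linearZ /= mul1r.
Qed.

End E0.

Lemma E0_embed (R : comPzRingType) (M : lmodType R) :
  exists i : {linear M -> E0 R M}, injective i.
Proof.
have hx : forall x : M, exists H : M -> QZ, (forall b b', H (b + b') = H b + H b') /\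
    (x <> 0 -> H x <> 0).
  move=> x; case: (pselect (x = 0)) => [->|x0].
    by exists (fun _ => 0); split => //; rewrite addr0.
  by have [H [HD Hx]] := sep_QZ x0; exists H.
have [Hf HfP] := choice hx.
have gP : forall b : M, forall x, addf (fun s : R => Hf x (s *: b)).
  by move=> b x a a'; rewrite scalerDl (proj1 (HfP x)).
pose g b : E0 R M := exist _ _ (gP b).
have glin : forall a b b', g (a *: b + b') = a *: g b + g b'.
  move=> a b b'; apply: E0_eq => x s /=.
  by rewrite scalerDr (proj1 (HfP x)) scalerA.
exists (mkLin glin) => m m' e.
apply/eqP; rewrite -subr_eq0; apply/eqP.
case: (pselect (m - m' = 0)) => // ne; exfalso.
apply: (proj2 (HfP (m - m')) ne).
have : mkLin glin (m - m') = 0 by rewrite linearB e subrr.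
move/(congr1 (fun f : E0 R M => sval f (m - m') 1)) => /=.
by rewrite scale1r.
Qed.

End PartC.
Import PartC.

Module PartD.
Local Open Scope ring_scope.
Local Open Scope classical_set_scope.

Section Chains.
Variables (R : comPzRingType) (E : lmodType R).

Lemma chain_sub (F : set (set E)) (X0 : set E) :
  F X0 -> (forall X, F X -> X <> set0 -> submodule X) -> total_on F subset ->
  X0 <> set0 -> submodule (\bigcup_(X in F) X).
Proof.
move=> FX0 Fsub Ftot X0n.
have ne (X : set E) p : X p -> X <> set0 by move=> Xp e; rewrite e in Xp.
split; [|split].
- by exists X0 => //; case: (Fsub X0 FX0 X0n).
- move=> x y [X FX Xx] [Y FY Yy].
  case: (Ftot X Y FX FY) => sub.
    exists Y => //; case: (Fsub Y FY (ne _ _ Yy)) => _ [h _]; apply: h => //; exact: sub.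
  exists X => //; case: (Fsub X FX (ne _ _ Xx)) => _ [h _]; apply: h => //; exact: sub.
- move=> r x [X FX Xx]; exists X => //.
  by case: (Fsub X FX (ne _ _ Xx)) => _ [_ h]; apply: h.
Qed.

Lemma sub_of_lin (V : lmodType R) (f : {linear V -> E}) :
  submodule (fun y => exists x, y = f x).
Proof.
split; [|split].
- by exists 0; rewrite linear0.
- by move=> _ _ [x ->] [y ->]; exists (x + y); rewrite linearD.
- by move=> r _ [x ->]; exists (r *: x); rewrite linearZ.
Qed.

Lemma sub_ker (V : lmodType R) (f : {linear E -> V}) :
  submodule (fun y => f y = 0).
Proof.
split; [|split].
- by rewrite linear0.
- by move=> x y hx hy; rewrite linearD hx hy addr0.
- by move=> r x hx; rewrite linearZ /= hx scaler0.
Qed.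
End Chains.

Section Hull.
Variables (R : comPzRingType) (M E : lmodType R).
Variables (Einj : injective_module E) (iota : {linear M -> E}) (iinj : injective iota).

Definition Ess (T : set E) := submodule T /\ (forall m, T (iota m)) /\
  (forall y, T y -> y <> 0 -> exists r m, r *: y = iota m /\ iota m <> 0).

Lemma hull_exists : exists S : set E, Ess S /\
  exists p : {linear E -> E}, (forall x, S (p x)) /\ (forall s, S s -> p s = s).
Proof.
have ne (X : set E) p : X p -> X <> set0 by move=> Xp e; rewrite e in Xp.
pose P' := fun T : set E => T = set0 \/ Ess T.
have [S [PS Smax]] : exists S, P' S /\ forall C, S `<` C -> ~ P' C.
  apply: Zorn_bigcup => F FP' Ftot.
  case: (pselect (exists X, F X /\ X <> set0)) => [[X0 [FX0 X0n]]|h]; last first.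
    left; apply/seteqP; split => // p [X FX Xp]; apply: h; exists X; split => //.
    exact: ne Xp.
  have GX X : F X -> X <> set0 -> Ess X by move=> FX Xn; case: (FP' X FX).
  right; split; [|split].
  - apply: chain_sub FX0 _ Ftot X0n => X FX Xn; by case: (GX X FX Xn).
  - by move=> m; exists X0 => //; case: (GX X0 FX0 X0n) => _ [].
  - move=> y [X FX Xy] y0; have [_ [_ h]] := GX X FX (ne _ _ Xy); exact: h.
have EssI : Ess (fun y => exists m, y = iota m).
  split; [exact: sub_of_lin|split]; first by move=> m; exists m.
  by move=> _ [m ->] ne0; exists 1, m; rewrite scale1r.
have ES : Ess S.
  case: PS => [S0|//]; exfalso; apply: (Smax _ _ (or_intror EssI)).
  rewrite S0; split => // e; apply: (e (iota 0)); by exists 0.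
have [[S0' [SDd SZz]] [Siota Sess]] := ES.
pose P'' := fun C : set E => C = set0 \/ (submodule C /\ forall z, C z -> S z -> z = 0).
have [C [PC Cmax]] : exists C, P'' C /\ forall D, C `<` D -> ~ P'' D.
  apply: Zorn_bigcup => F FP' Ftot.
  case: (pselect (exists X, F X /\ X <> set0)) => [[X0 [FX0 X0n]]|h]; last first.
    left; apply/seteqP; split => // p [X FX Xp]; apply: h; exists X; split => //.
    exact: ne Xp.
  have GX X : F X -> X <> set0 -> submodule X /\ forall z, X z -> S z -> z = 0.
    by move=> FX Xn; case: (FP' X FX).
  right; split.
  - apply: chain_sub FX0 _ Ftot X0n => X FX Xn; by case: (GX X FX Xn).
  - move=> z [X FX Xz] Sz; have [_ h] := GX X FX (ne _ _ Xz); exact: h.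
have subZ : submodule (fun z : E => z = 0).
  split; [by []|split]; first by move=> x y -> ->; rewrite addr0.
  by move=> r x ->; rewrite scaler0.
have [HC Cdisj] : submodule C /\ forall z, C z -> S z -> z = 0.
  case: PC => // C0; exfalso; apply: (Cmax (fun z => z = 0)).
    rewrite C0; split => // e; exact: (e 0).
  by right; split.
have [C0 [CD CZ]] := HC.
pose W := fun z => exists s c, S s /\ C c /\ z = s + c.
have HW : submodule W.
  split; [|split].
  - by exists 0, 0; split => //; split => //; rewrite addr0.
  - move=> _ _ [s [c [Ss [Cc ->]]]] [s' [c' [Ss' [Cc' ->]]]].
    exists (s + s'), (c + c'); split; first exact: SDd.
    by split; [exact: CD | rewrite addrACA].
  - move=> r _ [s [c [Ss [Cc ->]]]]; exists (r *: s), (r *: c).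
    by split; [exact: SZz | split; [exact: CZ | rewrite scalerDr]].
have uniq_dec s c s' c' : S s -> C c -> S s' -> C c' -> s + c = s' + c' -> s = s'.
  move=> Ss Cc Ss' Cc' e.
  have h : s - s' = c' - c.
    by rewrite -[s](addrK c) e [s' + _]addrC addrAC addrK.
  apply/eqP; rewrite -subr_eq0; apply/eqP; apply: Cdisj.
    rewrite h; apply: CD => //; rewrite -scaleN1r; exact: CZ.
  apply: SDd => //; rewrite -scaleN1r; exact: SZz.
pose Wm := subm HW.
have exd : forall w : Wm, exists s, `[< exists c, S s /\ C c /\ sval w = s + c >].
  move=> [w [s [c h]]]; exists s; apply/asboolP; by exists c.
pose pr (w : Wm) := xchoose (exd w).
have prP : forall w : Wm, exists c, S (pr w) /\ C c /\ sval w = pr w + c.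
  move=> w; exact/asboolP/(xchooseP (exd w)).
have prE : forall (w : Wm) s c, S s -> C c -> sval w = s + c -> pr w = s.
  move=> w s c Ss Cc e; have [c' [Sp [Cc' e']]] := prP w.
  by apply: (uniq_dec _ _ _ _ Sp Cc' Ss Cc); rewrite -e' e.
have prlin : forall a (x y : Wm), pr (a *: x + y) = a *: pr x + pr y.
  move=> a x y; have [cx [Sx [Cx ex]]] := prP x; have [cy [Sy [Cy ey]]] := prP y.
  apply: (prE _ _ (a *: cx + cy)).
  - by apply: SDd => //; apply: SZz.
  - by apply: CD => //; apply: CZ.
  - rewrite /= ex ey scalerDr; rewrite -!addrA; congr (_ + _).
    by rewrite addrCA.
have [p pE] := @Einj _ _ (svalL HW) (mkLin prlin) (@sig_eqP _ _).
have pS : forall s, S s -> p s = s.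
  move=> s Ss; have Ws : W s by exists s, 0; split => //; split => //; rewrite addr0.
  have := pE (exist _ s Ws); rewrite mkLinE => ->.
  by apply: (prE _ _ 0) => //; rewrite addr0.
have pC : forall c, C c -> p c = 0.
  move=> c Cc; have Wc : W c by exists 0, c; split => //; split => //; rewrite add0r.
  have := pE (exist _ c Wc); rewrite mkLinE => ->.
  by apply: (prE _ _ c) => //; rewrite add0r.
have kerC : forall z, p z = 0 -> C z.
  move=> z pz; case: (pselect (C z)) => // nC; exfalso.
  apply: (Cmax (fun z => p z = 0)).
  split; first exact: pC.
  by move=> e; apply: nC; apply: e.
  right; split; first exact: sub_ker.
  by move=> y py Sy; rewrite -(pS _ Sy).
have ET : Ess (fun y => exists x, y = p x).
  split; [exact: sub_of_lin|split].
    by move=> m; exists (iota m); rewrite pS.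
  move=> _ [x ->] px0.
  have nCx : ~ C x by move=> Cx; apply: px0; apply: pC.
  pose C' := fun z => exists c r, C c /\ z = c + r *: x.
  have HC' : submodule C'.
    split; [|split].
    - by exists 0, 0; split => //; rewrite scale0r addr0.
    - move=> _ _ [c [r [Cc ->]]] [c' [r' [Cc' ->]]]; exists (c + c'), (r + r').
      by split; [exact: CD | rewrite scalerDl addrACA].
    - move=> a _ [c [r [Cc ->]]]; exists (a *: c), (a * r).
      by split; [exact: CZ | rewrite scalerDr scalerA].
  have : ~ P'' C'.
    apply: Cmax; split.
      by move=> c Cc; exists c, 0; split => //; rewrite scale0r addr0.
    move=> e; apply: nCx; apply: e; exists 0, 1; split => //; by rewrite add0r scale1r.
  move=> nP; have [z [C'z [Sz z0]]] : exists z, C' z /\ S z /\ z <> 0.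
    apply: contra_notP nP => h; right; split => // z C'z Sz.
    apply: contra_notP h => h; by exists z.
  have [c [r [Cc ez]]] := C'z.
  have pz : p z = r *: p x by rewrite ez linearD linearZ pC // add0r.
  rewrite (pS _ Sz) in pz.
  have [r' [m [e1 e2]]] := Sess z Sz z0.
  by exists (r' * r), m; rewrite -scalerA -pz.
have TS : forall x, S (p x).
  move=> x; case: (pselect (S (p x))) => // nS; exfalso.
  apply: (Smax (fun y => exists x, y = p x)); last by right.
  split; first by move=> s Ss; exists s; rewrite pS.
  by move=> e; apply: nS; apply: e; exists x.
by exists S; split => //; exists p.
Qed.
End Hull.

End PartD.
Import PartD.

Module PartE.
Local Open Scope ring_scope.

Section Ideals.
Variable R : comPzRingType.

Lemma ideal0 (ds : seq R) : in_ideal ds 0.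
Proof. by exists (fun _ => 0); rewrite big1 // => i _; rewrite mul0r. Qed.
Lemma idealD (ds : seq R) x y : in_ideal ds x -> in_ideal ds y -> in_ideal ds (x + y).
Proof.
move=> [c ->] [c' ->]; exists (fun i => c i + c' i).
by rewrite -big_split /=; apply: eq_bigr => i _; rewrite mulrDl.
Qed.
Lemma idealM (ds : seq R) a x : in_ideal ds x -> in_ideal ds (a * x).
Proof.
move=> [c ->]; exists (fun i => a * c i).
by rewrite mulr_sumr; apply: eq_bigr => i _; rewrite mulrA.
Qed.
Lemma idealN (ds : seq R) x : in_ideal ds x -> in_ideal ds (- x).
Proof. by move=> h; rewrite -mulN1r; apply: idealM. Qed.
Lemma idealB (ds : seq R) x y : in_ideal ds x -> in_ideal ds y -> in_ideal ds (x - y).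
Proof. by move=> hx hy; apply: idealD => //; apply: idealN. Qed.
Lemma ideal_mem (ds : seq R) d : d \in ds -> in_ideal ds d.
Proof.
move=> dd; have hi : (index d ds < size ds)%N by rewrite index_mem.
exists (fun i : 'I_(size ds) => ((i : nat) == index d ds)%:R).
rewrite (bigD1 (Ordinal hi)) //= eqxx mul1r big1 ?addr0 ?nth_index // => i ne.
have : (i : nat) != index d ds.
  by apply: contra ne => /eqP e; apply/eqP; apply: val_inj.
by move/negbTE => ->; rewrite mul0r.
Qed.

Lemma ideal1 (x : R) : in_ideal [:: 1] x.
Proof. by exists (fun _ => x); rewrite big_ord1 /= mulr1. Qed.

Lemma GV1 : GV [:: (1 : R)].
Proof.
split.
  by move=> r h; have := h 1 (ideal1 1); rewrite mulr1.
move=> phi hphi; exists (phi 1) => x _.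
have h0 : phi 0 = 0.
  have := hphi 1 0 0 (ideal1 0) (ideal1 0); rewrite !mul1r addr0 => e.
  have := congr1 (fun t => t - phi 0) e; rewrite /= subrr addrK => e'.
  by rewrite -e'.
have := hphi x 1 0 (ideal1 1) (ideal1 0); rewrite mulr1 addr0 h0 addr0 => ->.
by rewrite mulrC.
Qed.

Lemma torGV0 (M : lmodType R) : torGV (0 : M).
Proof. by exists [:: 1]; split; [exact: GV1 | move=> d _; rewrite scaler0]. Qed.
End Ideals.

Section IsL.
Variables (R : comPzRingType) (M : lmodType R) (wM : w_module M).

Lemma is_L_self : is_L M M.
Proof.
have [tfM extM] := wM.
have [iota iinj] := E0_embed M.
have [S [[HS [Siota Sess]] [p [pS pid]]]] := hull_exists (@E0_injective R M) iota.
pose Sm := subm HS.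
have Sinj : injective_module Sm.
  move=> A B m f minj.
  have flin : forall a x y, sval (f (a *: x + y)) = a *: sval (f x) + sval (f y).
    by move=> a x y; rewrite linearP.
  have [g gE] := @E0_injective R M _ _ m (mkLin flin) minj.
  have g'lin : forall a x y, (exist _ (p (g (a *: x + y))) (pS _) : Sm) =
     a *: (exist _ (p (g x)) (pS _) : Sm) + (exist _ (p (g y)) (pS _) : Sm).
    by move=> a x y; apply: subm_eq => /=; rewrite !linearP.
  exists (mkLin g'lin) => a; apply: subm_eq; rewrite mkLinE /= gE mkLinE.
  by rewrite pid //; exact: svalP.
pose i0 (m : M) : Sm := exist _ (iota m) (Siota m).
have ilin : forall a x y, i0 (a *: x + y) = a *: i0 x + i0 y.
  by move=> a x y; apply: subm_eq => /=; rewrite linearP.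
pose i := mkLin ilin.
have iE : forall m, sval (i m) = iota m by [].
have i_inj : injective i.
  by move=> x y e; apply: iinj; rewrite -!iE e.
have Stf : forall (ds : seq R) (z : Sm), GV ds -> (forall d, in_ideal ds d -> d *: z = 0) -> z = 0.
  move=> ds z gv hz; case: (pselect (z = 0)) => // z0; exfalso.
  have sz0 : sval z <> 0 by move=> e; apply: z0; apply: subm_eq.
  have [r [m [e1 e2]]] := Sess _ (svalP z) sz0.
  have : m = 0.
    apply: tfM; exists ds; split => // d hd; apply: iinj; rewrite linear0 linearZ /= -e1.
    by rewrite scalerA mulrC -scalerA; have := congr1 (@sval _ _) (hz d hd) => /= ->; rewrite scaler0.
  by move=> m0; apply: e2; rewrite m0 linear0.
have Mw : forall y : Sm, (exists ds, GV ds /\ forall d, in_ideal ds d -> exists x, i x = d *: y) ->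
    exists z, i z = y.
  move=> y [ds [gv hy]].
  pose W := fun v : (M * R^o)%type => in_ideal ds v.2 /\ i v.1 = - ((v.2 : R) *: y).
  have HW : submodule W.
    split; [|split].
    - by split; [exact: ideal0 | rewrite linear0 scale0r oppr0].
    - move=> [m r] [m' r'] [h1 h2] [h1' h2']; split; first exact: idealD.
      change (i (m + m') = - (((r : R) + r') *: y)); by rewrite linearD h2 h2' scalerDl opprD.
    - move=> a [m r] [h1 h2]; split; first exact: idealM.
      change (i (a *: m) = - ((a * (r : R)) *: y)); by rewrite linearZ h2 /= scalerN scalerA.
  pose J := fun r : R^o => in_ideal ds r.
  have HJ : submodule J.
    split; [exact: ideal0|split]; [exact: idealD | move=> a x hx; exact: idealM].
  pose X := quotm HW.
  pose C := quotm HJ.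
  have flin : forall a (x1 y1 : M), mpi HW (a *: x1 + y1, 0) = a *: mpi HW (x1, 0) + mpi HW (y1, 0).
    move=> a x1 y1; rewrite -mpi_lin; congr mpi; congr pair => /=.
    by rewrite ?mulr0 ?scaler0 ?addr0.
  pose f := mkLin flin.
  have gE : forall v, mpi HJ (sval (mpi HW v)).2 = mpi HJ v.2.
    move=> v; apply/mpiE; have [h _] := mpi_sval HW v; exact: h.
  have glin : forall a (x1 y1 : X), mpi HJ (sval (a *: x1 + y1)).2 =
      a *: mpi HJ (sval x1).2 + mpi HJ (sval y1).2.
    move=> a; elim/mquot_ind => v1; elim/mquot_ind => v2.
    by rewrite -mpi_lin !gE -mpi_lin.
  pose g := mkLin glin.
  have gpi : forall v, g (mpi HW v) = mpi HJ v.2 by move=> v; rewrite mkLinE gE.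
  have ses_fg : ses f g.
    split; [|split].
    - move=> m m' /mpiE [_]; change (i (m - m') = - (((0 : R) - 0) *: y) -> m = m').
      rewrite subrr scale0r oppr0 linearB => /eqP.
      by rewrite subr_eq0 => /eqP; apply: i_inj.
    - elim/mquot_ind => r; exists (mpi HW (0, r)); by rewrite gpi.
    - elim/mquot_ind => v; rewrite gpi; split.
        move/mpi_eq0 => hv; have [x hx] := hy _ hv.
        exists (v.1 + x); rewrite mkLinE; apply/mpiE; split.
          by rewrite /= sub0r; apply: idealN.
        change (i (v.1 + x - v.1) = - (((0 : R) - v.2) *: y)).
        by rewrite addrAC subrr add0r sub0r scaleNr opprK hx.
      move=> [a ea]; rewrite -gpi -ea.
      have -> : f a = mpi HW (a, 0) by [].
      rewrite gpi; exact/mpi_eq0/ideal0.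
  have rA : forall r : R, (r *: (1 : R^o)) = (r : R^o) := fun r => mulr1 r.
  have isC : is_R_mod_ideal ds C.
    exists (mpi HJ 1); split.
      by elim/mquot_ind => r; exists r; rewrite -mpiZ rA.
    move=> r; rewrite -mpiZ rA; split.
      by move/mpi_eq0.
    by move=> h; apply/mpi_eq0.
  have [h hK] := extM ds gv C isC X f g ses_fg.
  pose v0 := sval (h (mpi HJ 1)).
  have hv0 : h (mpi HJ 1) = mpi HW v0 by rewrite mpiK.
  have e0 : in_ideal ds (v0.2 - 1).
    by have := hK (mpi HJ 1); rewrite hv0 gpi => /mpiE.
  have z0 : i v0.1 + (v0.2 : R) *: y = 0.
    apply: (Stf ds _ gv) => d hd.
    have : h (d *: mpi HJ 1) = 0.
      rewrite -mpiZ rA.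
      have -> : mpi HJ d = 0 by apply/mpi_eq0; exact: hd.
      exact: linear0.
    rewrite linearZZ hv0 -mpiZ => /mpi_eq0 [_] e.
    have e' : i (d *: v0.1) = - ((d * v0.2) *: y) by exact: e.
    have ez : d *: i v0.1 = i (d *: v0.1) by rewrite linearZZ.
    by rewrite scalerDr ez e' scalerA addNr.
  have [x2 hx2] := hy _ e0.
  exists (- v0.1 - x2).
  rewrite linearB linearN hx2 scalerBl scale1r opprB.
  have -> : - i v0.1 = (v0.2 : R) *: y by apply/eqP; rewrite eq_sym -subr_eq0 opprK addrC z0.
  by rewrite addrC subrK.
have qlin : forall a (x y : M), (a *: x + y) = a *: x + y by [].
exists M, Sm, (mkLin qlin), i, i.
split; first by move=> z; exists z.
split.
  move=> x; rewrite mkLinE; split; first by move=> ->; exact: torGV0.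
  exact: tfM.
split; first exact: i_inj.
split; first exact: Sinj.
split.
  move=> T [T0 [TD TZ]] [y [Ty y0]].
  have sy0 : sval y <> 0 by move=> e; apply: y0; apply: subm_eq.
  have [r [m [e1 e2]]] := Sess _ (svalP y) sy0.
  exists m; split.
    have -> : i m = r *: y by apply: subm_eq; rewrite iE /= e1.
    exact: TZ.
  by move=> e; apply: e2; rewrite -iE e.
split; first exact: i_inj.
move=> y; split; last exact: Mw.
move=> [z <-]; exists [:: 1]; split; first exact: GV1.
by move=> d _; exists (d *: z); rewrite linearZ.
Qed.
End IsL.

End PartE.
Import PartE.

Module PartF.
Local Open Scope ring_scope.

Section Free.
Variables (R : comPzRingType) (M : lmodType R).

Definition covers (phi : M -> R) (s : seq M) := forall x, x \notin s -> phi x = 0.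

Lemma sum_indep (V : lmodType R) (phi : M -> R) (v : M -> V) (s1 s2 : seq M) :
  uniq s1 -> uniq s2 -> covers phi s1 -> covers phi s2 ->
  \sum_(x <- s1) phi x *: v x = \sum_(x <- s2) phi x *: v x.
Proof.
move=> u1 u2 c1 c2.
have -> : \sum_(x <- s1) phi x *: v x = \sum_(x <- s1 | x \in s2) phi x *: v x.
  rewrite [RHS]big_mkcond /=; apply: eq_bigr => x _; case: ifP => // /negbT h.
  by rewrite c2 // scale0r.
have -> : \sum_(x <- s2) phi x *: v x = \sum_(x <- s2 | x \in s1) phi x *: v x.
  rewrite [RHS]big_mkcond /=; apply: eq_bigr => x _; case: ifP => // /negbT h.
  by rewrite c1 // scale0r.
rewrite -[LHS]big_filter -[RHS]big_filter; apply: perm_big; apply: uniq_perm; rewrite ?filter_uniq //.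
by move=> x; rewrite !mem_filter andbC.
Qed.

Definition FM := {phi : M -> R | exists s, covers phi s}.
HB.instance Definition _ := gen_eqMixin FM.
HB.instance Definition _ := gen_choiceMixin FM.
Lemma FM_eq (f g : FM) : (forall x, sval f x = sval g x) -> f = g.
Proof. by move=> h; apply: sig_eqP; apply: funext. Qed.

Definition cov (f : FM) : seq M := undup (sval (cid (svalP f))).
Lemma cov_uniq f : uniq (cov f). Proof. exact: undup_uniq. Qed.
Lemma covP f : covers (sval f) (cov f).
Proof.
move=> x; rewrite mem_undup; exact: (svalP (cid (svalP f))).
Qed.

Lemma covers_cat phi s t : covers phi s -> covers phi (s ++ t).
Proof. by move=> h x; rewrite mem_cat negb_or => /andP[hx _]; apply: h. Qed.
Lemma covers_catr phi s t : covers phi t -> covers phi (s ++ t).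
Proof. by move=> h x; rewrite mem_cat negb_or => /andP[_ hx]; apply: h. Qed.
Lemma covers_undup phi s : covers phi s -> covers phi (undup s).
Proof. by move=> h x; rewrite mem_undup; apply: h. Qed.

Lemma fzero_p : exists s, covers (fun _ : M => 0 : R) s. Proof. by exists [::]. Qed.
Definition fzero : FM := exist _ _ fzero_p.
Lemma fadd_p (f g : FM) : exists s, covers (fun x => sval f x + sval g x) s.
Proof.
exists (cov f ++ cov g) => x; rewrite mem_cat negb_or => /andP[h1 h2].
by rewrite (covP h1) (covP h2) addr0.
Qed.
Definition fadd (f g : FM) : FM := exist _ _ (fadd_p f g).
Lemma fopp_p (f : FM) : exists s, covers (fun x => - sval f x) s.
Proof. by exists (cov f) => x h; rewrite (covP h) oppr0. Qed.
Definition fopp (f : FM) : FM := exist _ _ (fopp_p f).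
Lemma fscale_p r (f : FM) : exists s, covers (fun x => r * sval f x) s.
Proof. by exists (cov f) => x h; rewrite (covP h) mulr0. Qed.
Definition fscale r (f : FM) : FM := exist _ _ (fscale_p r f).

Lemma faddA : associative fadd.
Proof. by move=> f g h; apply: FM_eq => x /=; rewrite addrA. Qed.
Lemma faddC : commutative fadd.
Proof. by move=> f g; apply: FM_eq => x /=; rewrite addrC. Qed.
Lemma fadd0 : left_id fzero fadd.
Proof. by move=> f; apply: FM_eq => x /=; rewrite add0r. Qed.
Lemma faddN : left_inverse fzero fopp fadd.
Proof. by move=> f; apply: FM_eq => x /=; rewrite addNr. Qed.
HB.instance Definition _ := GRing.isZmodule.Build FM faddA faddC fadd0 faddN.
Lemma fscaleA a b v : fscale a (fscale b v) = fscale (a * b) v.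
Proof. by apply: FM_eq => x /=; rewrite mulrA. Qed.
Lemma fscale1 : left_id 1 fscale.
Proof. by move=> f; apply: FM_eq => x /=; rewrite mul1r. Qed.
Lemma fscaleDr : right_distributive fscale +%R.
Proof. by move=> a f g; apply: FM_eq => x /=; rewrite mulrDr. Qed.
Lemma fscaleDl v : {morph fscale^~ v: a b / a + b}.
Proof. by move=> a b; apply: FM_eq => x /=; rewrite mulrDl. Qed.
HB.instance Definition _ := GRing.Zmodule_isLmodule.Build R FM fscaleA fscale1 fscaleDr fscaleDl.

Lemma FM_add f g x : sval (f + g : FM) x = sval f x + sval g x. Proof. by []. Qed.
Lemma FM_scale r (f : FM) x : sval (r *: f) x = r * sval f x. Proof. by []. Qed.
Lemma FM_0 x : sval (0 : FM) x = 0. Proof. by []. Qed.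
Lemma FM_sum (I : Type) (s : seq I) (F : I -> FM) x :
  sval (\sum_(i <- s) F i) x = \sum_(i <- s) sval (F i) x.
Proof.
elim: s => [|a s ih]; first by rewrite !big_nil.
by rewrite !big_cons FM_add ih.
Qed.

Definition ext (V : lmodType R) (v : M -> V) (f : FM) : V :=
  \sum_(x <- cov f) sval f x *: v x.
Lemma extE (V : lmodType R) (v : M -> V) (f : FM) s :
  uniq s -> covers (sval f) s -> ext v f = \sum_(x <- s) sval f x *: v x.
Proof. by move=> us cs; apply: sum_indep => //; [exact: cov_uniq | exact: covP]. Qed.
Lemma ext_lin (V : lmodType R) (v : M -> V) a (f g : FM) :
  ext v (a *: f + g) = a *: ext v f + ext v g.
Proof.
set s := undup (cov f ++ cov g).
have us : uniq s by apply: undup_uniq.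
have cf : covers (sval f) s by apply/covers_undup/covers_cat/covP.
have cg : covers (sval g) s by apply/covers_undup/covers_catr/covP.
have cfg : covers (sval (a *: f + g)) s.
  by move=> x h; rewrite FM_add FM_scale (cf _ h) (cg _ h) mulr0 addr0.
rewrite (extE _ us cfg) (extE _ us cf) (extE _ us cg).
rewrite scaler_sumr -big_split /=; apply: eq_bigr => x _.
by rewrite scalerDl scalerA.
Qed.
Definition extL (V : lmodType R) (v : M -> V) : {linear FM -> V} := mkLin (@ext_lin V v).

Definition delta (m : M) : FM.
Proof.
exists (fun x => ((x == m) : bool)%:R); exists [:: m] => x.
by rewrite inE => /negbTE ->.
Defined.
Lemma delta_ext (V : lmodType R) (v : M -> V) m : ext v (delta m) = v m.
Proof.
rewrite (@extE _ _ _ [:: m]) //; last by move=> x; rewrite inE /= => /negbTE ->.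
by rewrite big_seq1 /= eqxx scale1r.
Qed.
Lemma FM_decomp (f : FM) : f = ext delta f.
Proof.
apply: FM_eq => y; rewrite /ext FM_sum.
case: (boolP (y \in cov f)) => hy; last first.
  rewrite (covP hy) big1_seq // => x /andP[_ hx].
  rewrite FM_scale /=; case: eqP => [e|_]; last by rewrite mulr0.
  by rewrite -e in hx; rewrite (negbTE hy) in hx.
rewrite (bigD1_seq y) // ?cov_uniq // FM_scale /= eqxx mulr1 big1 ?addr0 //.
move=> x /negbTE nx /=.
by rewrite eq_sym nx mulr0.
Qed.

Lemma FM_projective : projective_module FM.
Proof.
move=> B C g f gsurj.
have [b bP] := choice (fun m => gsurj (f (delta m))).
exists (extL b) => x; rewrite mkLinE.
rewrite [in RHS](FM_decomp x) /ext !linear_sum; apply: eq_bigr => m _.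
by rewrite !linearZZ bP.
Qed.

Definition piF : {linear FM -> M} := extL id.
Lemma piF_surj : forall m, exists f, piF f = m.
Proof. by move=> m; exists (delta m); rewrite mkLinE delta_ext. Qed.
End Free.

End PartF.
Import PartF.

Module PartG.
Local Open Scope ring_scope.

Section Final.
Variables (R : comPzRingType) (M : lmodType R).

Lemma GVtfFM (ds : seq R) (f : FM M) : GV ds ->
  (forall d, in_ideal ds d -> d *: f = 0) -> f = 0.
Proof.
move=> [gi _] h; apply: FM_eq => y; rewrite FM_0; apply: gi => x hx.
by have := congr1 (fun g : FM M => sval g y) (h x hx); rewrite FM_scale FM_0 mulrC.
Qed.

Variable (tfM : GV_torsionfree M).
Let HK := sub_ker (piF M).
Let K := subm HK.

Lemma tfK : torsionfree K.
Proof.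
move=> r x nzd hx; apply: subm_eq; apply: FM_eq => y; rewrite FM_0; apply: nzd.
have := congr1 (fun k : K => sval (sval k) y) hx; by [].
Qed.

Lemma wK : w_module K.
Proof.
split.
  move=> x [ds [gv hx]]; apply: subm_eq; apply: (GVtfFM gv) => d hd.
  by have := congr1 (@sval _ _) (hx d hd).
move=> ds gv C [c [cgen cann]] E' fK gE [finj [gsurj gex]].
have [x0 hx0] := gsurj c.
have hd : forall d, exists k : K, in_ideal ds d -> fK k = d *: x0.
  move=> d; case: (pselect (in_ideal ds d)) => hd; last by exists 0.
  have : gE (d *: x0) = 0 by rewrite linearZZ hx0; apply/cann.
  by move/gex => [k hk]; exists k.
have [phi phiP] := choice hd.
have philin : forall a d d', in_ideal ds d -> in_ideal ds d' ->
    phi (a * d + d') = a *: phi d + phi d'.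
  move=> a d d' h1 h2; apply: finj.
  rewrite phiP; last by apply: idealD => //; apply: idealM.
  by rewrite linearP phiP // phiP // scalerDl scalerA.
pose psi y d := sval (sval (phi d)) y.
have hr : forall y, exists r, forall d, in_ideal ds d -> psi y d = r * d.
  move=> y; have [_ gs] := gv; apply: gs => a d d' h1 h2.
  by rewrite /psi philin.
have [rr rrP] := choice hr.
pose su := flatten [seq cov (sval (phi d)) | d <- ds].
have rcov : covers rr su.
  move=> y hy; have [gi _] := gv; apply: gi => x [cx ->].
  rewrite mulr_sumr big1 // => i _; rewrite mulrCA.
  have di : ds`_i \in ds by apply: mem_nth.
  rewrite -(rrP y _ (ideal_mem di)) /psi.
  rewrite (@covP _ _ (sval (phi ds`_i))) ?mulr0 //.
  apply: contra hy => h; apply/flattenP; exists (cov (sval (phi ds`_i))) => //.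
  by apply/mapP; exists ds`_i.
pose u : FM M := exist _ rr (ex_intro _ su rcov).
have du : forall d, in_ideal ds d -> d *: u = sval (phi d).
  move=> d h; apply: FM_eq => y; rewrite FM_scale /= mulrC; symmetry; exact: rrP.
have pu : piF M u = 0.
  apply: tfM; exists ds; split => // d h.
  by rewrite -linearZZ du //; exact: (svalP (phi d)).
pose uK : K := exist _ u pu.
pose x1 := x0 - fK uK.
have gfK : forall k, gE (fK k) = 0 by move=> k; apply/gex; exists k.
have x1ann : forall d, in_ideal ds d -> d *: x1 = 0.
  move=> d h; rewrite scalerBr -linearZZ.
  have -> : d *: uK = phi d by apply: subm_eq; rewrite /= -du.
  by rewrite phiP // subrr.
have [rep repP] := choice cgen.
have hwd : forall z r, z = r *: c -> rep z *: x1 = r *: x1.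
  move=> z r e; apply/eqP; rewrite -subr_eq0 -scalerBl; apply/eqP; apply: x1ann.
  by apply/cann; rewrite scalerBl -repP -e subrr.
have hlin : forall a z z', rep (a *: z + z') *: x1 = a *: (rep z *: x1) + rep z' *: x1.
  move=> a z z'; rewrite (hwd _ (a * rep z + rep z')).
    by rewrite scalerDl scalerA.
  by rewrite scalerDl -scalerA -!repP.
exists (mkLin hlin) => z; rewrite mkLinE linearZZ linearB hx0 gfK subr0.
by rewrite -repP.
Qed.

End Final.


End PartG.
Import PartG.

Theorem proposition2p8 (R : comPzRingType) (M : lmodType R) :
  w_module M -> w_projective M -> w_split M.
Proof.
move=> wM wP.
have [tfM _] := wM.
pose HK := sub_ker (piF M).
have := wP M (is_L_self wM) (subm HK) (@tfK _ M) (wK tfM).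
have sesK : ses (svalL HK) (piF M).
  split; first by move=> a b; apply: subm_eq.
  split; first exact: piF_surj.
  move=> b; split; first by move=> hb; exists (exist _ b hb).
  by move=> [a <-]; exact: (svalP a).
move=> /(_ _ _ _ sesK) [ds [gv hl]].
exists (subm HK), (FM M), (svalL HK), (piF M); split; first exact: FM_projective.
split => //; exists ds; split => // d dd; exact: hl _ (ideal_mem dd).
Qed.
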